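(* Let $M$ be a $4$-dimensional manifold with local coordinates $(x^1,\dots,x^4)$, $e_i=\partial/\partial x^i$, and Riemannian metric $g$ with components \[(g_{ij})=\begin{pmatrix} A&B&C&B\\ B&A&B&C\\ C&B&A&B\\ B&C&B&A\end{pmatrix},\] $A,B,C$ smooth functions with $A>C>B>0$. Let $P$ be the almost product structure with component matrix having rows $(0,0,1,0),(0,0,0,1),(1,0,0,0),(0,1,0,0)$. Then $(M,g,P)$ belongs to the class $\overline{\mathcal{W}}_3$ if and only if \[A_4-C_2=C_4-A_2,\quad (A+C)(B_4-B_2)=2B(A_4-C_2),\quad A_3-C_1=C_3-A_1,\quad (A+C)(B_3-B_1)=2B(A_3-C_1),\] where $A_i=\partial A/\partial x^i$, $B_i=\partial B/\partial x^i$, $C_i=\partial C/\partial x^i$.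
   Context: Let $\nabla$ be the Levi-Civita connection of $g$, $F(x,y,z)=g((\nabla_xP)y,z)$, and $\theta(x)=g^{ij}F(e_i,e_j,x)$ with $(g^{ij})$ the inverse of $(g_{ij})$. The manifold $(M,g,P)$ belongs to the class $\overline{\mathcal{W}}_3$ (a basic class of Naveira's classification) if for all vector fields $x,y,z$: \[F(x,y,z)=\tfrac14\Big[\big(g(x,y)+g(x,Py)\big)\theta(z)+\big(g(x,z)+g(x,Pz)\big)\theta(y)\Big],\qquad \theta(Pz)=-\theta(z).\] *)

(* Defs.v *)
(* Local-coordinate formalization of a
   4-dimensional Riemannian almost product manifold (M,g,P) on a chart
   domain U (an open subset of R^4). *)
From HB Require Import structures.
From mathcomp Require Import all_boot all_order all_algebra.
From mathcomp Require Import all_classical all_reals all_analysis.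
Set Implicit Arguments. Unset Strict Implicit. Unset Printing Implicit Defensive.
Import Order.TTheory GRing.Theory Num.Theory.
Import numFieldNormedType.Exports.
Local Open Scope classical_set_scope.
Local Open Scope ring_scope.

Section Geo.
Variable R : realType.
Notation pt := 'rV[R]_4.

Definition coord (i : 'I_4) : pt := delta_mx 0 i.

Definition pd (f : pt -> R) (i : 'I_4) (p : pt) : R := 'D_(coord i) f p.

Fixpoint Ck (U : set pt) (n : nat) (f : pt -> R) : Prop :=
  match n with
  | 0 => {within U, continuous f}
  | n'.+1 => (forall p, U p -> differentiable f p) /\
             forall i, Ck U n' (pd f i)
  end.
Definition smooth_on (U : set pt) (f : pt -> R) : Prop := forall n, Ck U n f.

Definition gmat (A B C : pt -> R) (p : pt) : 'M[R]_4 :=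
  \matrix_(i, j) (if i == j then A p else if odd (i + j) then B p else C p).

(* almost product structure P (constant components, P^i_j = row i col j) *)
Definition Pmat : 'M[R]_4 :=
  \matrix_(i, j) (if ((i + 2) %% 4 == j)%N then 1 else 0).

Variables (A B C : pt -> R).
Let g := gmat A B C.
Let ginv p := invmx (g p).

Definition dg (p : pt) (l i j : 'I_4) : R := pd (fun q => g q i j) l p.

(* Christoffel symbols of the Levi-Civita connection:
   nabla_{e_i} e_j = sum_k Gamma^k_ij e_k *)
Definition Gamma (p : pt) (k i j : 'I_4) : R :=
  2^-1 * \sum_(l < 4) ginv p k l * (dg p i j l + dg p j i l - dg p l i j).

(* components of (nabla_{e_i} P) e_j = sum_k nablaP i j k e_k *)
Definition nablaP (p : pt) (i j k : 'I_4) : R :=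
  \sum_(l < 4) Pmat l j * Gamma p k i l - \sum_(l < 4) Pmat k l * Gamma p l i j.

Definition Fc (p : pt) (i j k : 'I_4) : R :=
  \sum_(m < 4) g p m k * nablaP p i j m.

Definition thetac (p : pt) (k : 'I_4) : R :=
  \sum_(i < 4) \sum_(j < 4) ginv p i j * Fc p i j k.

(* tensors evaluated on tangent vectors at p (components in the basis e_i) *)
Definition gval (p : pt) (x y : pt) : R :=
  \sum_(i < 4) \sum_(j < 4) x 0 i * y 0 j * g p i j.
Definition Pvec (y : pt) : pt := \row_k (\sum_(j < 4) Pmat k j * y 0 j).
Definition Fval (p : pt) (x y z : pt) : R :=
  \sum_(i < 4) \sum_(j < 4) \sum_(k < 4) x 0 i * y 0 j * z 0 k * Fc p i j k.
Definition thetaval (p : pt) (x : pt) : R := \sum_(k < 4) x 0 k * thetac p k.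

Definition in_W3bar (U : set pt) : Prop :=
  forall p, U p -> forall x y z : pt,
    Fval p x y z = 4^-1 * ((gval p x y + gval p x (Pvec y)) * thetaval p z
                          + (gval p x z + gval p x (Pvec z)) * thetaval p y)
    /\ thetaval p (Pvec z) = - thetaval p z.

End Geo.

(* Main.v *)
Require Import Defs.
From HB Require Import structures.
From mathcomp Require Import all_boot all_order all_algebra.
From mathcomp Require Import all_classical all_reals all_analysis.
From mathcomp Require Import ring lra.
Import Order.TTheory GRing.Theory Num.Theory.
Import numFieldNormedType.Exports.
Local Open Scope classical_set_scope.
Local Open Scope ring_scope.
Set Implicit Arguments. Unset Strict Implicit.

Definition i0 : 'I_4 := @Ordinal 4 0 isT.
Definition i1 : 'I_4 := @Ordinal 4 1 isT.
Definition i2 : 'I_4 := @Ordinal 4 2 isT.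
Definition i3 : 'I_4 := @Ordinal 4 3 isT.

Lemma ord4P (P : 'I_4 -> Prop) : P i0 -> P i1 -> P i2 -> P i3 -> forall i, P i.
Proof.
move=> h0 h1 h2 h3 [[|[|[|[|n]]]] hn] //.
- by rewrite (_ : Ordinal hn = i0) //; apply/val_inj.
- by rewrite (_ : Ordinal hn = i1) //; apply/val_inj.
- by rewrite (_ : Ordinal hn = i2) //; apply/val_inj.
- by rewrite (_ : Ordinal hn = i3) //; apply/val_inj.
Qed.

Definition sig (j : 'I_4) : 'I_4 :=
  match val j with 0 => i2 | 1 => i3 | 2 => i0 | _ => i1 end.

Lemma sig0 : sig i0 = i2. Proof. by []. Qed.
Lemma sig1 : sig i1 = i3. Proof. by []. Qed.
Lemma sig2 : sig i2 = i0. Proof. by []. Qed.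
Lemma sig3 : sig i3 = i1. Proof. by []. Qed.
Definition sigE := (sig0, sig1, sig2, sig3).

Section Work.
Variable R : realType.
Variables (A B C : 'rV[R]_4 -> R).
Local Notation g := (gmat A B C).

Lemma big4 (F : 'I_4 -> R) :
  \sum_(l < 4) F l = F i0 + F i1 + F i2 + F i3.
Proof.
rewrite !big_ord_recl big_ord0 /= addr0 !addrA.
have E : forall i j : 'I_4, val i = val j -> F i = F j by move=> i j /val_inj ->.
by rewrite (E ord0 i0) // (E (lift ord0 ord0) i1) // (E (lift ord0 (lift ord0 ord0)) i2) //
  (E (lift ord0 (lift ord0 (lift ord0 ord0))) i3).
Qed.

Lemma sum44 (G F : 'I_4 -> 'I_4 -> R) :
  \sum_(i < 4) \sum_(j < 4) G i j * F i j = G i0 i0 * F i0 i0 + G i0 i1 * F i0 i1 + G i0 i2 * F i0 i2 + G i0 i3 * F i0 i3 + G i1 i0 * F i1 i0 + G i1 i1 * F i1 i1 + G i1 i2 * F i1 i2 + G i1 i3 * F i1 i3 + G i2 i0 * F i2 i0 + G i2 i1 * F i2 i1 + G i2 i2 * F i2 i2 + G i2 i3 * F i2 i3 + G i3 i0 * F i3 i0 + G i3 i1 * F i3 i1 + G i3 i2 * F i3 i2 + G i3 i3 * F i3 i3.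
Proof. by rewrite (big4 (fun i => \sum_(j < 4) G i j * F i j)) !(big4 (fun j => G _ j * F _ j)) !addrA. Qed.

Lemma PmatE l j : Pmat R l j = if sig l == j then 1 else 0.
Proof. by elim/ord4P: l; elim/ord4P: j; rewrite mxE. Qed.

Lemma sumP j (f : 'I_4 -> R) : \sum_l Pmat R l j * f l = f (sig j).
Proof.
by elim/ord4P: j; rewrite big4 !PmatE /= !(mul0r, mul1r, addr0, add0r).
Qed.

Lemma gsym p i j : g p i j = g p j i.
Proof. by rewrite !mxE eq_sym addnC. Qed.

Lemma gPE p k l : \sum_m g p m k * Pmat R m l = g p l (sig k).
Proof.
by elim/ord4P: k; elim/ord4P: l; rewrite big4 !PmatE !mxE /=
  !(mulr0, mulr1, addr0, add0r).
Qed.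

Lemma dgE p l i j : dg A B C p l i j =
  if i == j then pd A l p else if odd (i + j) then pd B l p else pd C l p.
Proof.
rewrite /dg.
have -> : (fun q => gmat A B C q i j) =
   (if i == j then A else if odd (i + j) then B else C).
  by apply/funext => q; rewrite mxE; case: (i == j) => //; case: (odd (i + j)).
by case: (i == j) => //; case: (odd (i + j)).
Qed.

Definition X p i j n := dg A B C p i j n + dg A B C p j i n - dg A B C p n i j.

Lemma L1 p (hu : g p \in unitmx) k i j :
  \sum_m g p m k * Gamma A B C p m i j = 2^-1 * X p i j k.
Proof.
rewrite /Gamma /=.
under eq_bigr do rewrite mulrCA mulr_sumr.
rewrite -mulr_sumr; congr (_ * _).
rewrite exchange_big /=.
under eq_bigr do (under eq_bigr do rewrite mulrA; rewrite -mulr_suml).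
have H : forall l, \sum_m g p m k * invmx (g p) m l = (1%:M : 'M[R]_4) k l.
  move=> l; rewrite -(mulmxV hu) mxE; apply: eq_bigr => m _.
  by rewrite gsym.
under eq_bigr do rewrite H mxE.
rewrite (bigD1 k) //= eqxx mul1r big1 ?addr0 // => l /negbTE.
by rewrite eq_sym => ->; rewrite mul0r.
Qed.

Lemma FcE p (hu : g p \in unitmx) i j k :
  Fc A B C p i j k = 2^-1 * X p i (sig j) k - 2^-1 * X p i j (sig k).
Proof.
rewrite /Fc /nablaP /=.
under eq_bigr do rewrite mulrBr.
rewrite sumrB; congr (_ - _).
  under eq_bigr do rewrite (sumP j (fun l => Gamma A B C p _ i l)).
  by rewrite L1.
under eq_bigr do rewrite mulr_sumr.
rewrite exchange_big /=.
under eq_bigr do (under eq_bigr do rewrite mulrA; rewrite -mulr_suml gPE).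
rewrite -L1 //; apply: eq_bigr => m _; by rewrite gsym.
Qed.


Definition l1 p := A p + 2 * B p + C p.
Definition l2 p := A p - 2 * B p + C p.
Definition l3 p := A p - C p.
Definition ia p := 4^-1 * ((l1 p)^-1 + (l2 p)^-1 + 2 * (l3 p)^-1).
Definition ib p := 4^-1 * ((l1 p)^-1 - (l2 p)^-1).
Definition ic p := 4^-1 * ((l1 p)^-1 + (l2 p)^-1 - 2 * (l3 p)^-1).
Definition Gi p : 'M[R]_4 :=
  \matrix_(i, j) (if i == j then ia p else if odd (i + j) then ib p else ic p).

Definition posp p := A p > C p /\ C p > B p /\ B p > 0.

Lemma gGi p : posp p -> g p *m Gi p = 1%:M.
Proof.
move=> [h1 [h2 h3]].
have n1 : l1 p != 0 by rewrite /l1; apply/eqP; lra.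
have n2 : l2 p != 0 by rewrite /l2; apply/eqP; lra.
have n3 : l3 p != 0 by rewrite /l3; apply/eqP; lra.
apply/matrixP => i j; elim/ord4P: i; elim/ord4P: j;
  rewrite !mxE big4 !mxE /= /ia /ib /ic.
all: move: n1 n2 n3; rewrite /l1 /l2 /l3 => n1 n2 n3.
all: by field; rewrite ?n1 ?n2 ?n3.
Qed.

Lemma gunit p : posp p -> g p \in unitmx.
Proof. by move=> h; have [] := mulmx1_unit (gGi h). Qed.

Lemma ginvE p : posp p -> invmx (g p) = Gi p.
Proof.
move=> h; have u := gunit h.
by rewrite -[invmx _]mulmx1 -(gGi h) mulmxA mulVmx // mul1mx.
Qed.

End Work.

Ltac genpd A B C p :=
  move: (pd A i0 p) (pd A i1 p) (pd A i2 p) (pd A i3 p)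
        (pd B i0 p) (pd B i1 p) (pd B i2 p) (pd B i3 p)
        (pd C i0 p) (pd C i1 p) (pd C i2 p) (pd C i3 p).

Section T.
Variable R : realType.
Variables (A B C : 'rV[R]_4 -> R).
Local Notation g := (gmat A B C).

Lemma lin1 (x y u v k : R) : x - y = k * (u - v) -> u = v -> x = y.
Proof. by move=> H E; apply/eqP; rewrite -subr_eq0 H E subrr mulr0. Qed.

Lemma thetaK p k : posp A B C p -> thetac A B C p k =
  Gi A B C p i0 i0 * Fc A B C p i0 i0 k + Gi A B C p i0 i1 * Fc A B C p i0 i1 k +
  Gi A B C p i0 i2 * Fc A B C p i0 i2 k + Gi A B C p i0 i3 * Fc A B C p i0 i3 k +
  Gi A B C p i1 i0 * Fc A B C p i1 i0 k + Gi A B C p i1 i1 * Fc A B C p i1 i1 k +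
  Gi A B C p i1 i2 * Fc A B C p i1 i2 k + Gi A B C p i1 i3 * Fc A B C p i1 i3 k +
  Gi A B C p i2 i0 * Fc A B C p i2 i0 k + Gi A B C p i2 i1 * Fc A B C p i2 i1 k +
  Gi A B C p i2 i2 * Fc A B C p i2 i2 k + Gi A B C p i2 i3 * Fc A B C p i2 i3 k +
  Gi A B C p i3 i0 * Fc A B C p i3 i0 k + Gi A B C p i3 i1 * Fc A B C p i3 i1 k +
  Gi A B C p i3 i2 * Fc A B C p i3 i2 k + Gi A B C p i3 i3 * Fc A B C p i3 i3 k.
Proof.
by move=> h; rewrite /thetac /= ginvE // (sum44 (Gi A B C p) (fun i j => Fc A B C p i j k)).
Qed.

Lemma thetaE p : posp A B C p ->
  [/\ thetac A B C p i0 = 2 * ia A B C p * (pd A i2 p - pd C i0 p) + 2 * ic A B C p * (pd C i2 p - pd A i0 p)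
         + 4 * ib A B C p * (pd B i2 p - pd B i0 p),
      thetac A B C p i1 = 2 * ia A B C p * (pd A i3 p - pd C i1 p) + 2 * ic A B C p * (pd C i3 p - pd A i1 p)
         + 4 * ib A B C p * (pd B i3 p - pd B i1 p),
      thetac A B C p i2 = 2 * ia A B C p * (pd A i0 p - pd C i2 p) + 2 * ic A B C p * (pd C i0 p - pd A i2 p)
         - 4 * ib A B C p * (pd B i2 p - pd B i0 p) &
      thetac A B C p i3 = 2 * ia A B C p * (pd A i1 p - pd C i3 p) + 2 * ic A B C p * (pd C i1 p - pd A i3 p)
         - 4 * ib A B C p * (pd B i3 p - pd B i1 p)].
Proof.
move=> h; have u := gunit h.
rewrite !thetaK // !FcE // /X !dgE !mxE /= !sigE.
move: (ia A B C p) (ib A B C p) (ic A B C p); genpd A B C p.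
move=> *; split; field; by rewrite ?pnatr_eq0.
Qed.

Lemma coordS i (f : 'I_4 -> R) : \sum_l Defs.coord R i 0 l * f l = f i.
Proof.
rewrite big4; elim/ord4P: i; rewrite !mxE /= ?mulr1n ?mulr0n;
  by rewrite !(mul0r, mul1r, addr0, add0r).
Qed.

Lemma FvalE p x y z : Fval A B C p x y z =
  \sum_i x 0 i * (\sum_j y 0 j * (\sum_k z 0 k * Fc A B C p i j k)).
Proof.
rewrite /Fval; move: (Fc A B C p) => F.
apply: eq_bigr => i _; rewrite mulr_sumr; apply: eq_bigr => j _.
rewrite !mulr_sumr; apply: eq_bigr => k _; by rewrite !mulrA.
Qed.

Lemma gvalE p x y : gval A B C p x y = \sum_i x 0 i * (\sum_j y 0 j * g p i j).
Proof.
rewrite /gval; move: (g p) => G.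
apply: eq_bigr => i _; rewrite mulr_sumr; apply: eq_bigr => j _; by rewrite !mulrA.
Qed.

Lemma gvalPE p x y : gval A B C p x (Pvec y) =
  \sum_i x 0 i * (\sum_j y 0 j * g p i (sig j)).
Proof.
rewrite /gval; move: (g p) => G.
apply: eq_bigr => i _.
rewrite !big4 !mxE !big4 !PmatE /= !sigE; ring.
Qed.

Lemma thetaPE p z : thetaval A B C p (Pvec z) = \sum_k z 0 k * thetac A B C p (sig k).
Proof.
rewrite /thetaval; move: (thetac A B C p) => th.
rewrite !big4 !mxE !big4 !PmatE /= !sigE; ring.
Qed.

Definition W p := forall x y z : 'rV[R]_4,
    Fval A B C p x y z = 4^-1 * ((gval A B C p x y + gval A B C p x (Pvec y)) * thetaval A B C p z
                          + (gval A B C p x z + gval A B C p x (Pvec z)) * thetaval A B C p y)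
    /\ thetaval A B C p (Pvec z) = - thetaval A B C p z.

Lemma W_comp p : W p <->
  (forall i j k, Fc A B C p i j k = 4^-1 * ((g p i j + g p i (sig j)) * thetac A B C p k
                                    + (g p i k + g p i (sig k)) * thetac A B C p j))
  /\ (forall k, thetac A B C p (sig k) = - thetac A B C p k).
Proof.
split.
  move=> HW; split.
    move=> i j k; have [H _] := HW (Defs.coord R i) (Defs.coord R j) (Defs.coord R k).
    by move: H; rewrite FvalE !gvalPE !gvalE /thetaval !coordS.
  move=> k; have [_ H] := HW 0 0 (Defs.coord R k).
  by move: H; rewrite thetaPE /thetaval !coordS.
move=> [Hc Ht] x y z; split.
  rewrite FvalE !gvalPE !gvalE /thetaval.
  under eq_bigr do under eq_bigr do under eq_bigr do rewrite Hc.
  move: (g p) (thetac A B C p) => G th.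
  rewrite !big4 /= !sigE; ring.
rewrite thetaPE /thetaval; under eq_bigr do rewrite Ht.
rewrite -sumrN; apply: eq_bigr => k _; by rewrite mulrN.
Qed.

Lemma comp_eqs p : posp A B C p ->
  ((forall i j k, Fc A B C p i j k = 4^-1 * ((g p i j + g p i (sig j)) * thetac A B C p k
                                    + (g p i k + g p i (sig k)) * thetac A B C p j))
  /\ (forall k, thetac A B C p (sig k) = - thetac A B C p k)) <->
  [/\ pd A i3 p - pd C i1 p = pd C i3 p - pd A i1 p,
      (A p + C p) * (pd B i3 p - pd B i1 p) = 2 * B p * (pd A i3 p - pd C i1 p),
      pd A i2 p - pd C i0 p = pd C i2 p - pd A i0 p
    & (A p + C p) * (pd B i2 p - pd B i0 p) = 2 * B p * (pd A i2 p - pd C i0 p)].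
Proof.
move=> h.
have [ha [hb hc]] := h.
have n1 : A p + 2 * B p + C p != 0 by apply/eqP; lra.
have n2 : A p - 2 * B p + C p != 0 by apply/eqP; lra.
have n3 : A p - C p != 0 by apply/eqP; lra.
have n4 : A p + C p != 0 by apply/eqP; lra.
have u := gunit h; have [t0 t1 t2 t3] := thetaE h.
split.
  move=> [Hc Ht].
  have H1 := Ht i1; have H0 := Ht i0; have H011 := Hc i0 i1 i1; have H100 := Hc i1 i0 i0.
  move: H1 H0 H011 H100.
  rewrite !sigE t0 t1 t2 t3 !FcE // /X !dgE !mxE /= !sigE /ia /ib /ic /l1 /l2 /l3.
  genpd A B C p => a0 a1 a2 a3 b0 b1 b2 b3 c0 c1 c2 c3 H1 H0 H011 H100.
  have e1 : a3 - c1 = c3 - a1.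
    apply: (lin1 (k := (A p - C p) / 2) _ H1).
    by field; rewrite ?n1 ?n2 ?n3 ?n4 ?pnatr_eq0.
  have e3 : a2 - c0 = c2 - a0.
    apply: (lin1 (k := (A p - C p) / 2) _ H0).
    by field; rewrite ?n1 ?n2 ?n3 ?n4 ?pnatr_eq0.
  have e1' : c3 = a3 - c1 + a1 by rewrite e1 subrK.
  have e3' : c2 = a2 - c0 + a0 by rewrite e3 subrK.
  rewrite e1' e3' in H011 H100.
  split => //.
    apply: (lin1 (k := (A p + 2 * B p + C p) * (A p - 2 * B p + C p) / (A p + C p)) _ H011).
    by field; rewrite ?n1 ?n2 ?n3 ?n4 ?pnatr_eq0.
  apply: (lin1 (k := (A p + 2 * B p + C p) * (A p - 2 * B p + C p) / (A p + C p)) _ H100).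
  by field; rewrite ?n1 ?n2 ?n3 ?n4 ?pnatr_eq0.
move=> [e1 e2 e3 e4].
have s1 : pd C i3 p = pd A i3 p - pd C i1 p + pd A i1 p by rewrite e1 subrK.
have s3 : pd C i2 p = pd A i2 p - pd C i0 p + pd A i0 p by rewrite e3 subrK.
have s2 : pd B i3 p = pd B i1 p + 2 * B p * (pd A i3 p - pd C i1 p) / (A p + C p).
  rewrite -e2; move: (pd B i3 p) (pd B i1 p) => ? ?.
  by field; rewrite ?n4.
have s4 : pd B i2 p = pd B i0 p + 2 * B p * (pd A i2 p - pd C i0 p) / (A p + C p).
  rewrite -e4; move: (pd B i2 p) (pd B i0 p) => ? ?.
  by field; rewrite ?n4.
have [th0 th1 th2 th3] : [/\ thetac A B C p i0 = 2 * (pd A i2 p - pd C i0 p) / (A p + C p),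
   thetac A B C p i1 = 2 * (pd A i3 p - pd C i1 p) / (A p + C p),
   thetac A B C p i2 = - (2 * (pd A i2 p - pd C i0 p) / (A p + C p)) &
   thetac A B C p i3 = - (2 * (pd A i3 p - pd C i1 p) / (A p + C p))].
  rewrite t0 t1 t2 t3 s1 s2 s3 s4 /ia /ib /ic /l1 /l2 /l3.
  genpd A B C p => *.
  by split; field; rewrite ?n1 ?n2 ?n3 ?n4 ?pnatr_eq0.
split.
  move=> i j k; rewrite FcE // /X !dgE.
  elim/ord4P: i; elim/ord4P: j; elim/ord4P: k;
    rewrite !mxE /= !sigE ?th0 ?th1 ?th2 ?th3 ?s1 ?s2 ?s3 ?s4; genpd A B C p => *;
    by field; rewrite ?n4 ?pnatr_eq0.
move=> k; elim/ord4P: k; by rewrite !sigE ?th0 ?th1 ?th2 ?th3 ?opprK.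
Qed.
End T.

Unset Implicit Arguments.

Lemma n0E : (0 : 'I_4) = i0. Proof. by apply/val_inj. Qed.
Lemma n1E : (1 : 'I_4) = i1. Proof. by apply/val_inj. Qed.
Lemma n2E : (2 : 'I_4) = i2. Proof. by apply/val_inj. Qed.
Lemma n3E : (3 : 'I_4) = i3. Proof. by apply/val_inj. Qed.

Theorem corollary3p6 (R : realType) (U : set 'rV[R]_4)
  (A B C : 'rV[R]_4 -> R) :
  open U ->
  smooth_on U A -> smooth_on U B -> smooth_on U C ->
  (forall p, U p -> A p > C p /\ C p > B p /\ B p > 0) ->
  (in_W3bar A B C U <->
   forall p, U p ->
     [/\ pd A 3 p - pd C 1 p = pd C 3 p - pd A 1 p,
         (A p + C p) * (pd B 3 p - pd B 1 p) = 2 * B p * (pd A 3 p - pd C 1 p),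
         pd A 2 p - pd C 0 p = pd C 2 p - pd A 0 p
       & (A p + C p) * (pd B 2 p - pd B 0 p) = 2 * B p * (pd A 2 p - pd C 0 p)]).
Proof.
move=> _ _ _ _ Hpos.
rewrite n3E n2E n1E n0E.
split.
  move=> HW p Up.
  have h : posp A B C p := Hpos p Up.
  apply/(@comp_eqs R A B C p h)/(@W_comp R A B C p).
  exact: HW p Up.
move=> He p Up.
have h : posp A B C p := Hpos p Up.
exact: (proj2 (@W_comp R A B C p) (proj2 (@comp_eqs R A B C p h) (He p Up))).
Qed.
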